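(* Let $\mathbf u$ be an infinite word whose language is closed under reversal, and suppose there exists an integer $H$ such that for every factor $f$ of $\mathbf u$ with $|f|\ge H$ the longest palindromic suffix of $f$ occurs exactly once in $f$. Then $$2+\mathcal C(n+1)-\mathcal C(n)=\mathcal P(n+1)+\mathcal P(n)\quad\text{for every } n\ge H.$$
   Context: For a finite word $w$, $\overline{w}$ denotes its reversal; $w$ is a palindrome if $w=\overline w$. The language of $\mathbf u$ is closed under reversal if $\overline w$ is a factor of $\mathbf u$ whenever $w$ is. $\mathcal C(n)$ is the number of distinct factors of $\mathbf u$ of length $n$ and $\mathcal P(n)$ the number of distinct palindromic factors of $\mathbf u$ of length $n$. *)

(* Defs.v *)
From mathcomp Require Import all_boot all_order all_algebra.
From mathcomp Require Import boolp.
Set Implicit Arguments. Unset Strict Implicit. Unset Printing Implicit Defensive.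

Definition palindrome (A : eqType) (w : seq A) : bool := rev w == w.

Definition factor (A : Type) (u : nat -> A) (w : seq A) : Prop :=
  exists i : nat, w = mkseq (fun k => u (i + k)) (size w).

Definition closed_under_reversal (A : Type) (u : nat -> A) : Prop :=
  forall w : seq A, factor u w -> factor u (rev w).

(* longest palindromic suffix: drop the least number k of letters such that
   the remaining suffix is a palindrome (k = size f always works: empty word) *)
Definition lps (A : eqType) (f : seq A) : seq A :=
  drop (find (fun k => palindrome (drop k f)) (iota 0 (size f).+1)) f.

Definition occ (A : eqType) (s f : seq A) : nat :=
  if size s <= size f then
    count (fun i => take (size s) (drop i f) == s) (iota 0 (size f - size s).+1)
  else 0.

Definition C (A : finType) (u : nat -> A) (n : nat) : nat :=
  #|[set w : n.-tuple A | `[< factor u (tval w) >]]|.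

Definition P (A : finType) (u : nat -> A) (n : nat) : nat :=
  #|[set w : n.-tuple A | `[< factor u (tval w) >] && palindrome (tval w)]|.

(* Main.v *)
Require Import Defs.
From mathcomp Require Import all_boot all_order all_algebra.
From mathcomp Require Import boolp zify.
Set Implicit Arguments. Unset Strict Implicit. Unset Printing Implicit Defensive.


Definition win (A : Type) (u : nat -> A) (i m : nat) : seq A :=
  mkseq (fun k => u (i + k)) m.

Definition subw (A : Type) (u : nat -> A) (N : nat) (w : seq A) : Prop :=
  exists i, i + size w <= N /\ w = win u i (size w).

Lemma size_win (A : Type) (u : nat -> A) i m : size (win u i m) = m.
Proof. by rewrite size_mkseq. Qed.

Lemma drop_win (A : Type) (u : nat -> A) i m d :
  drop d (win u i m) = win u (i + d) (m - d).
Proof.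
apply: (@eq_from_nth _ (u 0)); first by rewrite size_drop !size_win.
move=> k; rewrite size_drop size_win => hk.
by rewrite nth_drop !nth_mkseq ?addnA //; lia.
Qed.

Lemma take_win (A : Type) (u : nat -> A) i m k :
  k <= m -> take k (win u i m) = win u i k.
Proof.
move=> hk; apply: (@eq_from_nth _ (u 0)).
  by rewrite size_takel ?size_win.
move=> j; rewrite size_takel ?size_win // => hj.
by rewrite nth_take // !nth_mkseq //; lia.
Qed.

Lemma subw_win (A : Type) (u : nat -> A) N i m :
  i + m <= N -> subw u N (win u i m).
Proof. by move=> h; exists i; rewrite size_win. Qed.

Lemma subw_drop (A : Type) (u : nat -> A) N s d :
  subw u N s -> subw u N (drop d s).
Proof.
case=> i [hi e]; case: (leqP d (size s)) => hd.
  rewrite e drop_win; apply: subw_win; lia.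
rewrite drop_oversize ?(ltnW hd) //; exists 0; split=> //.
Qed.

Lemma subw_take (A : Type) (u : nat -> A) N s k :
  subw u N s -> subw u N (take k s).
Proof.
case=> i [hi e]; rewrite e.
case: (leqP k (size s)) => hk.
  by rewrite take_win //; apply: subw_win; lia.
by rewrite take_oversize ?size_win ?(ltnW hk) //; apply: subw_win.
Qed.

Lemma subw_mono (A : Type) (u : nat -> A) N M s :
  N <= M -> subw u N s -> subw u M s.
Proof. by move=> h [i [hi e]]; exists i; split=> //; lia. Qed.


Lemma occ_ge2 (A : eqType) (p f : seq A) i1 i2 :
  i1 < i2 -> i2 + size p <= size f ->
  take (size p) (drop i1 f) = p -> take (size p) (drop i2 f) = p ->
  2 <= occ p f.
Proof.
move=> h12 h2 e1 e2; rewrite /occ.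
have -> : size p <= size f by lia.
rewrite -size_filter.
have -> : 2 = size [:: i1; i2] by [].
apply: uniq_leq_size; first by rewrite /= inE andbT neq_ltn h12.
move=> x; rewrite !inE => /orP [] /eqP ->; rewrite mem_filter mem_iota ?e1 ?e2 eqxx /=; lia.
Qed.

Lemma lps_spec (A : eqType) (f : seq A) :
  exists k, k <= size f /\ lps f = drop k f /\ palindrome (lps f).
Proof.
rewrite /lps; set k := find _ _.
have hh : has (fun k => palindrome (drop k f)) (iota 0 (size f).+1).
  apply/hasP; exists (size f); first by rewrite mem_iota; lia.
  by rewrite drop_size.
have hk : k < (size f).+1 by rewrite -[X in _ < X](size_iota 0) -has_find.
exists k; split; first by lia.
split=> //.
have := nth_find 0 hh; rewrite -/k nth_iota //.
Qed.


Lemma take_drop_win (A : Type) (u : nat -> A) L i m :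
  i + m <= L -> take m (drop i (win u 0 L)) = win u i m.
Proof. by move=> h; rewrite drop_win add0n take_win //; lia. Qed.

Lemma pal_rev (A : eqType) (w : seq A) : palindrome w -> rev w = w.
Proof. by move/eqP. Qed.

Lemma rich_step (A : eqType) (u : nat -> A) H
  (hr : forall f, factor u f -> H <= size f -> occ (lps f) f = 1) n N :
  n <= N -> H <= N.+1 ->
  (subw u N (win u (N.+1 - n) n) \/ subw u N (rev (win u (N.+1 - n) n))) ->
  ~ (subw u N (win u (N - n) n.+1) \/ subw u N (rev (win u (N - n) n.+1))) ->
  palindrome (win u (N - n) n.+1).
Proof.
move=> hnN hH hv he.
set W := win u 0 N.+1.
have fW : factor u W by exists 0; rewrite size_win.
have hW : H <= size W by rewrite size_win.
have ho := hr W fW hW.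
case: (lps_spec W) => k [hk [ep pp]]; rewrite ep in ho pp.
rewrite size_win in hk.
rewrite /W drop_win add0n in ho pp.
set s := N.+1 - k in ho pp.
have hocc : forall i1 i2, i1 < i2 -> i2 + s <= N.+1 ->
   take s (drop i1 W) = win u k s -> take s (drop i2 W) = win u k s -> False.
  move=> i1 i2 h1 h2 e1 e2.
  have := occ_ge2 (p := win u k s) (f := W) h1; rewrite !size_win => /(_ h2 e1 e2).
  by rewrite /W ho.
case: (ltngtP s n.+1) => hs.
-
  have ep' : win u k s = drop (n - s) (win u (N.+1 - n) n).
    rewrite drop_win; congr win; lia.
  case: hv => -[j [hj ej]]; rewrite ?size_rev size_win in hj ej.
  + exfalso; apply: (hocc (j + (n - s)) k); first by lia. by lia.
    * rewrite /W take_drop_win; last by lia.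
      by rewrite ep' ej drop_win; congr win; lia.
    * by rewrite /W take_drop_win //; lia.
  + exfalso; apply: (hocc j k); first by lia. by lia.
    * rewrite /W take_drop_win; last by lia.
      rewrite -(pal_rev pp) ep' rev_drop size_win ej take_win; last by lia.
      congr win; lia.
    * by rewrite /W take_drop_win //; lia.
-
  exfalso; apply: he; right.
  have -> : win u (N - n) n.+1 = drop (s - n.+1) (win u k s).
    rewrite drop_win; congr win; lia.
  rewrite rev_drop size_win (pal_rev pp) take_win; last by lia.
  apply: subw_win; lia.
- have -> : win u (N - n) n.+1 = win u k s by congr win; lia.
  exact: pp.
Qed.


Definition pc (A : finType) m (S : {set m.-tuple A}) :=
  #|[set w in S | palindrome (tval w)]|.
Definition nc (A : finType) m (S : {set m.-tuple A}) :=
  #|[set w in S | ~~ palindrome (tval w)]|.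

Definition rclosed (A : finType) m (S : {set m.-tuple A}) :=
  forall w, (rev_tuple w \in S) = (w \in S).

Lemma rev_tupleK (A : finType) m (w : m.-tuple A) : rev_tuple (rev_tuple w) = w.
Proof. by apply: val_inj; rewrite /= revK. Qed.

Lemma add_old (A : finType) m (S : {set m.-tuple A}) x :
  rclosed S -> x \in S -> S :|: [set x; rev_tuple x] = S.
Proof.
move=> hS hx; apply/setP => w; rewrite !inE.
case: (boolP (w \in S)) => //= hw; apply/negP => /orP [] /eqP e; move: hw.
  by rewrite e hx.
by rewrite e hS hx.
Qed.

Lemma card_pal_nc (A : finType) m (S : {set m.-tuple A}) :
  #|S| = pc S + nc S.
Proof.
rewrite /pc /nc -(cardsID [set w : m.-tuple A | palindrome (tval w)] S).
congr (_ + _); apply: eq_card => w; rewrite !inE //; by rewrite andbC.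
Qed.

Lemma add_new (A : finType) m (S : {set m.-tuple A}) x :
  rclosed S -> x \notin S ->
  pc (S :|: [set x; rev_tuple x]) = pc S + palindrome (tval x) /\
  nc (S :|: [set x; rev_tuple x]) = nc S + (~~ palindrome (tval x)).*2.
Proof.
move=> hS hx.
have hrx : rev_tuple x \notin S by rewrite hS.
case: (boolP (palindrome (tval x))) => hp /=.
  have ex : rev_tuple x = x by apply: val_inj; exact: pal_rev.
  rewrite ex setUC; have -> : [set x; x] = [set x] by apply/setP=> w; rewrite !inE orbb.
  rewrite /pc /nc; split.
    have -> : [set w in x |: S | palindrome (tval w)] = x |: [set w in S | palindrome (tval w)].
      apply/setP=> w; rewrite !inE; case: (eqVneq w x) => [->|] //=; by rewrite hp.
    by rewrite cardsU1 inE (negbTE hx) addnC.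
  rewrite ?addn0; apply: eq_card => w; rewrite !inE; case: (eqVneq w x) => [->|] //=.
  by rewrite hp (negbTE hx).
have hxr : x != rev_tuple x.
  apply/eqP => e; move: hp; rewrite /palindrome.
  by have /= <- := congr1 val e; rewrite eqxx.
have hpr : ~~ palindrome (tval (rev_tuple x)).
  by move: hp; rewrite /palindrome /= revK eq_sym.
rewrite setUC.
have -> : [set x; rev_tuple x] :|: S = x |: (rev_tuple x |: S).
  by apply/setP => w; rewrite !inE orbA.
split.
  rewrite /pc addn0; apply: eq_card => w; rewrite !inE.
  case: (eqVneq w x) => [->|_] /=; first by rewrite (negbTE hp) andbF.
  case: (eqVneq w (rev_tuple x)) => [->|_] //=; by rewrite (negbTE hpr) andbF.
rewrite /nc.
have -> : [set w in x |: (rev_tuple x |: S) | ~~ palindrome (tval w)]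
   = x |: (rev_tuple x |: [set w in S | ~~ palindrome (tval w)]).
  apply/setP=> w; rewrite !inE.
  case: (eqVneq w x) => [->|_] /=; first by [].
  by case: (eqVneq w (rev_tuple x)) => [->|_] //=.
rewrite !cardsU1 !inE (negbTE hx) (negbTE hrx) (negbTE hxr) /=.
lia.
Qed.


Lemma size_winP (A : Type) (u : nat -> A) i m : size (win u i m) == m.
Proof. by rewrite size_win. Qed.

Definition wt (A : Type) (u : nat -> A) i m : m.-tuple A := Tuple (size_winP u i m).

Definition Fset (A : finType) (u : nat -> A) m N : {set m.-tuple A} :=
  [set w : m.-tuple A | `[< subw u N w \/ subw u N (rev w) >]].

Lemma Fset_closed (A : finType) (u : nat -> A) m N : rclosed (Fset u m N).
Proof.
move=> w; rewrite !inE /= revK; apply: asbool_equiv_eq; tauto.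
Qed.

Lemma subw_step (A : Type) (u : nat -> A) N w :
  size w <= N.+1 ->
  subw u N.+1 w <-> subw u N w \/ w = win u (N.+1 - size w) (size w).
Proof.
move=> hs; split.
  case=> i [hi e]; case: (ltnP (i + size w) N.+1) => h.
    by left; exists i; split=> //; lia.
  by right; rewrite {1}e; congr win; lia.
case=> [|e]; first exact: subw_mono.
exists (N.+1 - size w); split=> //; lia.
Qed.

Lemma Fset_step (A : finType) (u : nat -> A) m N : m <= N.+1 ->
  Fset u m N.+1 = Fset u m N :|: [set wt u (N.+1 - m) m; rev_tuple (wt u (N.+1 - m) m)].
Proof.
move=> hm; apply/setP => w; rewrite !inE.
have sw : size w = m by rewrite size_tuple.
have sr : size (rev w) = m by rewrite size_rev size_tuple.
have e1 : (w == wt u (N.+1 - m) m) = (tval w == win u (N.+1 - m) m) by [].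
have e2 : (w == rev_tuple (wt u (N.+1 - m) m)) = (rev w == win u (N.+1 - m) m).
  rewrite -val_eqE /=; apply/eqP/eqP => [->|<-]; by rewrite revK.
rewrite e1 e2.
apply/asboolP/idP.
  case=> h.
    move/subw_step: h; rewrite sw => /(_ hm) [h|->].
    - by apply/orP; left; apply/asboolP; left.
    - by rewrite eqxx /= !orbT.
  move/subw_step: h; rewrite sr => /(_ hm) [h|->].
  - by apply/orP; left; apply/asboolP; right.
  - by rewrite eqxx /= !orbT.
case/orP => [/asboolP [h|h]|/orP [/eqP e|/eqP e]].
- by left; apply: subw_mono h.
- by right; apply: subw_mono h.
- by left; apply/subw_step; rewrite sw //; right.
- by right; apply/subw_step; rewrite sr //; right.
Qed.

Lemma Fset_nil (A : finType) (u : nat -> A) m N : N < m -> Fset u m N = set0.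
Proof.
move=> h; apply/setP => w; rewrite !inE; apply/asboolP.
by case=> -[i [hi _]]; move: hi; rewrite ?size_rev size_tuple; lia.
Qed.

Lemma Fset_base (A : finType) (u : nat -> A) n :
  Fset u n n = set0 :|: [set wt u 0 n; rev_tuple (wt u 0 n)].
Proof.
apply/setP => w; rewrite !inE /=.
have e1 : (w == wt u 0 n) = (tval w == win u 0 n) by [].
have e2 : (w == rev_tuple (wt u 0 n)) = (rev w == win u 0 n).
  rewrite -val_eqE /=; apply/eqP/eqP => [->|<-]; by rewrite revK.
rewrite e1 e2.
have sw : size w = n by rewrite size_tuple.
have sr : size (rev w) = n by rewrite size_rev size_tuple.
apply/asboolP/idP.
  case=> -[i [hi e]]; move: hi e; rewrite ?sw ?sr => hi e;
   have i0 : i = 0 by lia.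
  - by rewrite e i0 eqxx.
  - by rewrite e i0 eqxx orbT.
case/orP => /eqP e; [left|right]; exists 0; rewrite ?sw ?sr; by split.
Qed.

Lemma pc0 (A : finType) m : pc (set0 : {set m.-tuple A}) = 0.
Proof. by apply/eqP; rewrite cards_eq0; apply/eqP/setP => w; rewrite !inE. Qed.
Lemma nc0 (A : finType) m : nc (set0 : {set m.-tuple A}) = 0.
Proof. by apply/eqP; rewrite cards_eq0; apply/eqP/setP => w; rewrite !inE. Qed.
Lemma rclosed0 (A : finType) m : rclosed (set0 : {set m.-tuple A}).
Proof. by move=> w; rewrite !inE. Qed.


Lemma rich_invariant (A : finType) (u : nat -> A) H
  (hr : forall f, factor u f -> H <= size f -> occ (lps f) f = 1) n :
  H <= n -> forall d,
  nc (Fset u n.+1 (n + d)) + 2 = #|Fset u n (n + d)| + pc (Fset u n (n + d)).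
Proof.
move=> hH; elim=> [|d IH].
  rewrite addn0 Fset_nil // Fset_base nc0.
  have h0 : wt u 0 n \notin (set0 : {set n.-tuple A}) by rewrite in_set0.
  have [hp hn] := add_new (@rclosed0 A n) h0.
  rewrite card_pal_nc hp hn pc0 nc0.
  by case: (palindrome _).
set N := n + d in IH *.
have -> : n + d.+1 = N.+1 by rewrite addnS.
have hnN : n <= N by rewrite /N leq_addr.
rewrite (Fset_step u (m:=n)) ?(leqW hnN) // (Fset_step u (m:=n.+1)) //.
set v := wt u (N.+1 - n) n.
set e := wt u (N.+1 - n.+1) n.+1.
have ev : tval e = win u (N - n) n.+1 by [].
case: (boolP (v \in Fset u n N)) => hv.
  rewrite (add_old (@Fset_closed A u n N) hv).
  case: (boolP (e \in Fset u n.+1 N)) => he.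
    by rewrite (add_old (@Fset_closed A u n.+1 N) he).
  have pe : palindrome (tval e).
    rewrite ev; apply: (rich_step hr hnN); first by lia.
      by move: hv; rewrite inE => /asboolP.
    by move=> h; move: he; rewrite inE => /asboolP.
  have [_ hn] := add_new (x:=e) (@Fset_closed A u n.+1 N) he.
  by rewrite hn pe addn0.
have he : e \notin Fset u n.+1 N.
  move: (hv); apply: contra; rewrite !inE => /asboolP h; apply/asboolP.
  have dv : tval v = drop 1 (tval e) by rewrite ev drop_win; congr win; lia.
  rewrite dv; case: h => h; [left|right].
    exact: subw_drop.
  by rewrite rev_drop; apply: subw_take.
have pe : ~~ palindrome (tval e).
  move: (hv); apply: contra => pe; rewrite inE; apply/asboolP; right.
  have dv : tval v = drop 1 (tval e) by rewrite ev drop_win; congr win; lia.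
  rewrite dv rev_drop (pal_rev pe) ev size_win take_win; last by lia.
  apply: subw_win; lia.
have [hp1 hn1] := add_new (x:=v) (@Fset_closed A u n N) hv.
have [_ hn2] := add_new (x:=e) (@Fset_closed A u n.+1 N) he.
rewrite hn2 card_pal_nc hp1 hn1 (negbTE pe) /=.
move: IH; rewrite card_pal_nc.
by case: (palindrome _) => /=; lia.
Qed.


Lemma subw_factor (A : Type) (u : nat -> A) N s : subw u N s -> factor u s.
Proof. by case=> i [_ e]; exists i. Qed.

Lemma bound (A : finType) (u : nat -> A) m :
  exists B, forall w : m.-tuple A, factor u w -> subw u B w.
Proof.
suff: forall s : seq (m.-tuple A), exists B, forall w, w \in s -> factor u w -> subw u B w.
  by case/(_ (enum [set: m.-tuple A])) => B hB; exists B => w; apply: hB; rewrite mem_enum inE.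
elim=> [|x s [B hB]]; first by exists 0.
case: (pselect (factor u x)) => [[i ei]|nx].
  exists (maxn B (i + m)) => w; rewrite inE => /orP [/eqP ->|ws] fw.
    exists i; rewrite size_tuple; split; first by lia.
    by move: ei; rewrite size_tuple.
  by apply: subw_mono (hB w ws fw); lia.
exists B => w; rewrite inE => /orP [/eqP ->|ws] fw; first by [].
exact: hB.
Qed.

Lemma Fset_all (A : finType) (u : nat -> A) m B N :
  closed_under_reversal u ->
  (forall w : m.-tuple A, factor u w -> subw u B w) -> B <= N ->
  Fset u m N = [set w : m.-tuple A | `[< factor u w >]].
Proof.
move=> hc hB hN; apply/setP => w; rewrite !inE; apply: asbool_equiv_eq; split.
  case=> h; first exact: subw_factor h.
  by rewrite -(revK w); apply: hc; apply: subw_factor h.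
by move=> /hB h; left; apply: subw_mono h.
Qed.

Import GRing.Theory.
Local Open Scope ring_scope.


Theorem proposition4p5 (A : finType) (u : nat -> A) (H : nat) :
  closed_under_reversal u ->
  (forall f : seq A, factor u f -> (H <= size f)%N -> occ (lps f) f = 1%N) ->
  forall n : nat, (H <= n)%N ->
    2 + (C u n.+1)%:Z - (C u n)%:Z = (P u n.+1)%:Z + (P u n)%:Z.
Proof.
move=> hc hr n hH.
have [B1 h1] := bound u n; have [B2 h2] := bound u n.+1.
have := @rich_invariant A u H hr n hH (B1 + B2).
rewrite (Fset_all hc h1 (_ : (B1 <= n + (B1 + B2))%N)); last by lia.
rewrite (Fset_all hc h2 (_ : (B2 <= n + (B1 + B2))%N)); last by lia.
set S0 := [set w : n.-tuple A | _].
set S1 := [set w : n.+1.-tuple A | _].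
have C0 : C u n = #|S0| by [].
have C1 : C u n.+1 = #|S1| by [].
have P0 : P u n = pc S0 by rewrite /P /pc; apply: eq_card => w; rewrite !inE.
have P1 : P u n.+1 = pc S1 by rewrite /P /pc; apply: eq_card => w; rewrite !inE.
have K1 := card_pal_nc S1.
rewrite C1 P0 P1 K1 => e.
move: e; rewrite -C0 => e.
have e' : (2 + (pc S1 + nc S1) = (pc S1 + pc S0) + C u n)%N by lia.
have -> : (2%:Z + (pc S1 + nc S1)%N%:Z = ((pc S1 + pc S0) + C u n)%N%:Z)%R.
  by rewrite -e'.
by rewrite PoszD addrK.
Qed.
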